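(* For positive integers $a$ and $n$, $$M_n(a,1,1)=\sum_{k=0}^n\Psi_{n-1}(k,a,1,1).$$
   Context: All constant terms are taken with $\operatorname{CT}_x=\operatorname{CT}_{x_n}\cdots\operatorname{CT}_{x_1}$ (iterated constant-term extraction), where $(1-x_i)^{-b}$ and $x_i/(1-x_i)$ are expanded as power series in $x_i$, and for $i<j$, $(x_j-x_i)^{-c}=x_j^{-c}(1-x_i/x_j)^{-c}$ is expanded as a power series in $x_i/x_j$. $$M_n(a,b,c):=\operatorname{CT}_x\prod_{i=1}^n(1-x_i)^{-b}x_i^{-a+1}\prod_{1\le i<j\le n}(x_j-x_i)^{-c},$$ $$\Psi_n(k,a,b,c):=\operatorname{CT}_x[t^k]\prod_{i=1}^n(1-x_i)^{-b}x_i^{-a+1}\Big(1+t\frac{x_i}{1-x_i}\Big)\prod_{1\le i<j\le n}(x_j-x_i)^{-c},$$ with $[t^k]$ the coefficient of $t^k$; empty products equal $1$ (so $\Psi_0(k,\cdot)$ is $1$ for $k=0$ and $0$ otherwise). *)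

(* Defs.v *)
From mathcomp Require Import all_boot all_algebra.

Set Implicit Arguments.
Unset Strict Implicit.
Unset Printing Implicit Defensive.

Import GRing.Theory.
Local Open Scope ring_scope.

(* Explicit expansion of the iterated constant term
     CT_x prod_i F_i(x_i) x_i^{-a+1} prod_{i<j} (x_j - x_i)^{-c},
   where F_i(x_i) = sum_m f i m x_i^m is a power series in x_i and
   (x_j - x_i)^{-c} = sum_p C(c+p-1,p) x_i^p x_j^{-c-p}  (i<j).
   A term of the full expansion is indexed by m : 'I_n -> nat (the exponent
   picked in F_i) and p i j (i<j) (the exponent picked in the (i,j) factor);
   the exponent of x_i in that term is
     m i - (a-1) + sum_{j>i} p i j - sum_{k<i} (c + p k i).
   The iterated constant term is the (finite) sum of the coefficients of the
   terms in which every exponent is 0.  Every such solution has all entries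
   bounded by (a + n c)(2^n - 1) < ct_bound n a c, so summing over indices
   below ct_bound loses nothing. *)

Definition ct_bound (n a c : nat) : nat := ((a + n * c) * 2 ^ n).+1.

Definition ct_valid (n a c : nat) (m : 'I_n -> nat) (p : 'I_n -> 'I_n -> nat)
  : bool :=
  [forall i : 'I_n,
     (m i)%:Z - (a%:Z - 1)
     + (\sum_(j : 'I_n | (i < j)%N) (p i j)%:Z)
     - (\sum_(k : 'I_n | (k < i)%N) (c + p k i)%:Z) == 0]
  && [forall i : 'I_n, forall j : 'I_n, ~~ (i < j)%N ==> (p i j == 0%N)].

Definition iterCT (R : comNzRingType) (n a c : nat) (f : 'I_n -> nat -> R) : R :=
  \sum_(m : {ffun 'I_n -> 'I_(ct_bound n a c)})
   \sum_(p : {ffun 'I_n * 'I_n -> 'I_(ct_bound n a c)}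
          | ct_valid a c (fun i => nat_of_ord (m i))
                         (fun i j => nat_of_ord (p (i, j))))
     ((\prod_(i : 'I_n) f i (m i))
      * \prod_(i : 'I_n) \prod_(j : 'I_n | (i < j)%N)
          ('C(c + p (i, j) - 1, p (i, j)))%:R).

(* coefficient of x^m in (1-x)^{-b} *)
Definition negbin_coef (b m : nat) : nat := 'C(b + m - 1, m).
(* coefficient of x^m in x/(1-x) *)
Definition geom1_coef (m : nat) : nat := (0 < m)%N.

Definition M (n a b c : nat) : rat :=
  @iterCT rat n a c (fun _ m => (negbin_coef b m)%:R).

(* coefficient of x^m in (1-x)^{-b} (1 + t x/(1-x)), as a polynomial in t *)
Definition psi_coef (b m : nat) : {poly rat} :=
  ((negbin_coef b m)%:R)%:P
  + 'X * ((\sum_(l < m.+1) negbin_coef b l * geom1_coef (m - l))%N%:R)%:P.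

Definition Psi (n k a b c : nat) : rat :=
  (@iterCT {poly rat} n a c (fun _ m => psi_coef b m))`_k.

(* Main.v *)
Require Import Defs.
From mathcomp Require Import all_boot all_algebra.
From mathcomp Require Import zify.
Set Implicit Arguments.
Unset Strict Implicit.
Set Warnings "-notation-overridden,-ambiguous-paths".
Import order.Order.TTheory GRing.Theory Num.Theory.
Local Open Scope ring_scope.

Lemma sum_ord_lt (n i : nat) (g : nat -> nat) :
  (\sum_(k : 'I_n | (k < i)%N) g k <= \sum_(k < i) g k)%N.
Proof.
case: (leqP i n) => h.
  rewrite (eq_bigl (fun k : 'I_n => predT k && (k < i)%N)) //.
  by rewrite (big_ord_narrow_cond (P := predT) (F := fun k : 'I_n => g k) h).
apply: (@leq_trans (\sum_(k : 'I_n) g k)).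
  by rewrite [X in (_ <= X)%N](bigID (fun k : 'I_n => (k < i)%N)) /= leq_addr.
rewrite (big_ord_widen _ _ (ltnW h)).
by rewrite [X in (_ <= X)%N](bigID (fun k : 'I_i => (k < n)%N)) /= leq_addr.
Qed.

Lemma sum_pow2 (i : nat) : (\sum_(k < i) 2 ^ k < 2 ^ i)%N.
Proof.
elim: i => [|i IH]; first by rewrite big_ord0.
rewrite big_ord_recr /= expnS; by rewrite mul2n -addnn ltn_add2r.
Qed.

Lemma sum_one (i : nat) : (\sum_(k < i) 1 = i)%N.
Proof. by rewrite sum_nat_const card_ord muln1. Qed.

Definition ev n a (P : 'I_n -> 'I_n -> nat) (i : 'I_n) : int :=
  (a%:Z - 1) + \sum_(k : 'I_n | (k < i)%N) (1 + P k i)%:Z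
  - \sum_(j : 'I_n | (i < j)%N) (P i j)%:Z.
Definition lowz n (P : 'I_n -> 'I_n -> nat) :=
  [forall i : 'I_n, forall j : 'I_n, ~~ (i < j)%N ==> (P i j == 0%N)].
Definition okP n a P := [forall i, 0 <= @ev n a P i] && lowz P.
Definition T n a (P : 'I_n -> 'I_n -> nat) (i : 'I_n) : nat :=
  (a - 1 + \sum_(k : 'I_n | (k < i)%N) (1 + P k i))%N.

Lemma sumZ (I : finType) (Q : pred I) (F : I -> nat) :
  \sum_(i | Q i) (F i)%:Z = (\sum_(i | Q i) F i)%N%:Z.
Proof. by rewrite (big_morph Posz PoszD (erefl _)). Qed.

Lemma ev_T n a P i : (0 < a)%N ->
  @ev n a P i = (T a P i)%:Z - (\sum_(j : 'I_n | (i < j)%N) P i j)%N%:Z.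
Proof.
move=> a0; rewrite /ev /T !sumZ PoszD.
by rewrite -(subnK a0) addnK PoszD addrK.
Qed.

Lemma sum_ge_term n (F : 'I_n -> nat) (Q : pred 'I_n) j :
  Q j -> (F j <= \sum_(i | Q i) F i)%N.
Proof. by move=> Qj; rewrite (bigD1 j) //= leq_addr. Qed.

Lemma T_bound n a P : (0 < a)%N -> @okP n a P ->
  forall i : 'I_n, (T a P i <= (a + n) * 2 ^ i)%N.
Proof.
move=> a0 /andP[/forallP pos _].
have Hs : forall i : 'I_n, (\sum_(j : 'I_n | (i < j)%N) P i j <= T a P i)%N.
  by move=> i; have := pos i; rewrite ev_T // subr_ge0 lez_nat.
suff H: forall m (i : 'I_n), (i < m)%N -> (T a P i <= (a+n)*2^i)%N.
  by move=> i; exact: (H i.+1 i (ltnSn i)).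
elim=> [//|m IH] i; rewrite ltnS leq_eqVlt => /orP[/eqP Ei|]; last exact: IH.
rewrite /T big_split /=.
have h1: (\sum_(k : 'I_n | (k < i)%N) 1 <= i)%N.
  by apply: leq_trans (sum_ord_lt n i (fun _ => 1%N)) _; rewrite sum_one.
have h2: (\sum_(k : 'I_n | (k < i)%N) P k i <= \sum_(k : 'I_n | (k < i)%N) (a+n)*2^k)%N.
  apply: leq_sum => k ki.
  apply: leq_trans (sum_ge_term (fun j => P k j) ki) _.
  apply: leq_trans (Hs k) _; apply: IH; by rewrite -Ei.
have h3: (\sum_(k : 'I_n | (k < i)%N) (a+n)*2^k <= (a+n)*(2^i - 1))%N.
  rewrite -big_distrr /= leq_mul2l; apply/orP; right.
  apply: leq_trans (sum_ord_lt _ _ _) _.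
  have := sum_pow2 i; lia.
have := ltn_ord i; have : (0 < 2 ^ i)%N by rewrite expn_gt0.
move: h1 h2 h3; set A := \sum_(k | _) 1; set B := \sum_(k | _) P k i.
set C := \sum_(k | _) _.
nia.
Qed.

Lemma ev_bound n a P (i : 'I_n) : (0 < a)%N -> @okP n a P ->
  (`|ev a P i|%N <= (a + n) * 2 ^ n)%N.
Proof.
move=> a0 ok; have := T_bound a0 ok i; have /andP[/forallP pos _] := ok.
have := pos i; rewrite ev_T // => h.
have h2 : (2 ^ i <= 2 ^ n)%N by rewrite leq_exp2l // ltnW.
move=> h1; apply: (leq_trans _ (leq_trans h1 _)); last by rewrite leq_mul2l h2 orbT.
move: h; rewrite subr_ge0 lez_nat => h.
by rewrite subzn // leq_subr.
Qed.

Lemma entry_bound n a P (i j : 'I_n) : (0 < a)%N -> @okP n a P ->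
  (P i j <= (a + n) * 2 ^ i)%N.
Proof.
move=> a0 ok; have := T_bound a0 ok i; have /andP[/forallP pos /forallP lz] := ok.
case: (ltnP i j) => ij; last first.
  by have := lz i => /forallP/(_ j)/implyP; rewrite -leqNgt ij => /(_ isT)/eqP ->.
have := pos i; rewrite ev_T // subr_ge0 lez_nat => h.
apply: leq_trans; apply: leq_trans h.
exact: (sum_ge_term (fun j => P i j) ij).
Qed.

Definition PofF n B (p : {ffun 'I_n * 'I_n -> 'I_B}) : 'I_n -> 'I_n -> nat :=
  fun i j => nat_of_ord (p (i, j)).
Definition okF n a B (p : {ffun 'I_n * 'I_n -> 'I_B}) := okP a (PofF p).
Definition enat n a B (p : {ffun 'I_n * 'I_n -> 'I_B}) (i : 'I_n) : nat :=
  `|ev a (PofF p) i|%N.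

Definition mof n a (p : {ffun 'I_n * 'I_n -> 'I_(ct_bound n a 1)}) :
  {ffun 'I_n -> 'I_(ct_bound n a 1)} :=
  [ffun i => @inord ((a + n * 1) * 2 ^ n) (enat a p i)].

Lemma valid_iff n a (p : {ffun 'I_n * 'I_n -> 'I_(ct_bound n a 1)})
    (m : {ffun 'I_n -> 'I_(ct_bound n a 1)}) : (0 < a)%N ->
  ct_valid a 1 (fun i => nat_of_ord (m i)) (fun i j => nat_of_ord (p (i, j)))
  = okF a p && (m == mof p).
Proof.
move=> a0; rewrite /ct_valid /okF /okP.
case Lz: (lowz (PofF p)); last first.
  by move: Lz; rewrite /lowz /PofF => ->; rewrite !andbF.
move: Lz; rewrite /lowz /PofF => Lz.
rewrite /= Lz !andbT.
apply/forallP/andP.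
  move=> H.
  have E : forall i, ev a (PofF p) i = (m i)%:Z.
    move=> i; have := H i; rewrite /ev /PofF /=; move/eqP; lia.
  split; first by apply/forallP => i; rewrite E.
  apply/eqP/ffunP => i; rewrite ffunE; apply: val_inj => /=.
  by rewrite /enat E inordK //= ltn_ord.
move=> [/forallP pos /eqP ->] i; rewrite ffunE /=.
have ok : okP a (PofF p) by rewrite /okP /lowz /PofF /= Lz andbT; apply/forallP.
rewrite inordK; last by rewrite ltnS /enat muln1 (ev_bound _ a0 ok).
have e0 := pos i; rewrite /enat abszE ger0_norm //.
move: e0; rewrite /ev /PofF /= => e0; apply/eqP; lia.
Qed.

Lemma mElim (R : comNzRingType) n a (f : 'I_n -> nat -> R) : (0 < a)%N ->
  @iterCT R n a 1 f =
  \sum_(p : {ffun 'I_n * 'I_n -> 'I_(ct_bound n a 1)} | okF a p)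
     \prod_i f i (enat a p i).
Proof.
move=> a0; rewrite /iterCT.
have C1 : forall p : {ffun 'I_n * 'I_n -> 'I_(ct_bound n a 1)},
  \prod_(i : 'I_n) \prod_(j : 'I_n | (i < j)%N)
     ('C(1 + p (i, j) - 1, p (i, j)))%:R = 1 :> R.
  move=> p; apply: big1 => i _; apply: big1 => j _.
  by rewrite add1n subn1 /= binn.
under eq_bigr do under eq_bigr do rewrite C1 mulr1.
rewrite (exchange_big_dep predT) //= [RHS]big_mkcond; apply: eq_bigr => p _.
case: ifP => okp.
  rewrite (big_pred1 (mof p)); last by move=> m; rewrite /= valid_iff // okp.
  apply: eq_bigr => i _; rewrite ffunE inordK //.
  by rewrite ltnS /enat muln1 (ev_bound _ a0 okp).
by rewrite big_pred0 // => m; rewrite valid_iff // okp.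
Qed.

Section Step.
Definition build n' a (p' : {ffun 'I_n' * 'I_n' -> 'I_(ct_bound n' a 1)})
  (c : {ffun 'I_n' -> 'I_(ct_bound n'.+1 a 1)}) :
  {ffun 'I_n'.+1 * 'I_n'.+1 -> 'I_(ct_bound n'.+1 a 1)} :=
  [ffun ij => match unlift ord_max ij.1, unlift ord_max ij.2 with
   | Some i, Some j => @inord ((a + n'.+1 * 1) * 2 ^ n'.+1) (p' (i, j))
   | Some i, None => c i
   | None, _ => @ord0 ((a + n'.+1 * 1) * 2 ^ n'.+1)
   end].

Definition restr n' a (p : {ffun 'I_n'.+1 * 'I_n'.+1 -> 'I_(ct_bound n'.+1 a 1)}) :
  {ffun 'I_n' * 'I_n' -> 'I_(ct_bound n' a 1)} :=
  [ffun ij => @inord ((a + n' * 1) * 2 ^ n')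
                (p (lift ord_max ij.1, lift ord_max ij.2))].

Definition colp n' a (p : {ffun 'I_n'.+1 * 'I_n'.+1 -> 'I_(ct_bound n'.+1 a 1)}) :
  {ffun 'I_n' -> 'I_(ct_bound n'.+1 a 1)} :=
  [ffun k => p (lift ord_max k, ord_max)].

Lemma Bmono n' a : (ct_bound n' a 1 <= ct_bound n'.+1 a 1)%N.
Proof.
rewrite /ct_bound ltnS !muln1 expnS; apply: leq_mul; first lia.
by rewrite leq_pmull.
Qed.

Lemma build_ll n' a p' c (i j : 'I_n') :
  PofF (@build n' a p' c) (lift ord_max i) (lift ord_max j) = p' (i, j).
Proof.
rewrite /PofF ffunE /= !liftK inordK //.
exact: leq_trans (ltn_ord _) (Bmono n' a).
Qed.

Lemma build_lm n' a p' c (i : 'I_n') :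
  PofF (@build n' a p' c) (lift ord_max i) ord_max = c i.
Proof. by rewrite /PofF ffunE /= liftK unlift_none. Qed.

Lemma build_m n' a p' c (j : 'I_n'.+1) :
  PofF (@build n' a p' c) ord_max j = 0%N.
Proof. by rewrite /PofF ffunE /= unlift_none. Qed.

Lemma sum_recr_lift n' (F : 'I_n'.+1 -> int) (Q : pred 'I_n'.+1) :
  \sum_(i | Q i) F i = \sum_(i : 'I_n' | Q (lift ord_max i)) F (lift ord_max i)
                       + (if Q ord_max then F ord_max else 0).
Proof.
rewrite big_mkcond big_ord_recr /=.
congr (_ + _); rewrite [RHS]big_mkcond; apply: eq_bigr => i _.
by have -> : widen_ord (leqnSn n') i = lift ord_max i by apply: val_inj; rewrite /= /bump leqNgt ltn_ord.
Qed.
End Step.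

Lemma lift_lt n' (i j : 'I_n') :
  (lift ord_max i < lift ord_max j)%N = (i < j)%N.
Proof. by rewrite !lift_max. Qed.
Lemma max_lt_lift n' (j : 'I_n') : (@ord_max n' < lift ord_max j)%N = false.
Proof. by rewrite lift_max /= ltnNge ltnW. Qed.
Lemma lift_lt_max n' (j : 'I_n') : (lift ord_max j < @ord_max n')%N.
Proof. by rewrite lift_max /=. Qed.

Lemma ev_build_l n' a p' c (k : 'I_n') :
  ev a (PofF (@build n' a p' c)) (lift ord_max k) = ev a (PofF p') k - (c k)%:Z.
Proof.
rewrite /ev !sum_recr_lift max_lt_lift lift_lt_max.
under eq_bigl do rewrite lift_lt.
under eq_bigr do rewrite build_ll.
under [X in _ - (X + _)]eq_bigl do rewrite lift_lt.
under [X in _ - (X + _)]eq_bigr do rewrite build_ll.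
by rewrite build_lm /PofF addr0 opprD addrA.
Qed.

Lemma ev_build_m n' a p' c : (0 < a)%N ->
  0 <= ev a (PofF (@build n' a p' c)) ord_max.
Proof.
move=> a0; rewrite /ev [X in _ - X]big1 ?subr0 => [|j _]; last by rewrite build_m.
rewrite sumZ; lia.
Qed.

Lemma okF_build n' a p' c : (0 < a)%N ->
  okF a (@build n' a p' c) = okF a p' && [forall k, (c k <= enat a p' k)%N].
Proof.
move=> a0; rewrite /okF /okP.
have Lz: lowz (PofF (build p' c)) = lowz (PofF p').
  apply/forallP/forallP => H i.
  - apply/forallP => j; have := H (lift ord_max i) => /forallP/(_ (lift ord_max j)).
    by rewrite lift_lt build_ll.
  - apply/forallP => j; case: (unliftP ord_max i) => [i'|] ->; last first.
      by rewrite build_m eqxx implybT.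
    case: (unliftP ord_max j) => [j'|] ->; last by rewrite lift_lt_max.
    rewrite lift_lt build_ll; exact: (forallP (H i') j').
rewrite Lz.
have Pos: [forall i, 0 <= ev a (PofF (build p' c)) i] =
   [forall k, 0 <= ev a (PofF p') k] && [forall k, (c k <= enat a p' k)%N].
  apply/forallP/andP.
  - move=> H; split; apply/forallP => k; have := H (lift ord_max k);
      rewrite ev_build_l subr_ge0 => h.
    + exact: le_trans _ h.
    + rewrite /enat -lez_nat abszE ger0_norm //; exact: le_trans _ h.
  - move=> [/forallP H1 /forallP H2] i; case: (unliftP ord_max i) => [k|] ->;
      last exact: ev_build_m.
    rewrite ev_build_l subr_ge0; have := H2 k.
    by rewrite /enat -lez_nat abszE ger0_norm.
by rewrite Pos andbAC.
Qed.

Lemma prod_bool (I : finType) (b : pred I) :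
  \prod_(i : I) ((b i)%:R : rat) = ([forall i, b i])%:R.
Proof.
case: (boolP [forall i, b i]) => [/forallP H | /forallPn [k Hk]].
  by rewrite big1 // => i _; rewrite H.
by rewrite (bigD1 k) //= (negbTE Hk) mul0r.
Qed.

Lemma count_le_nat B e : (e < B)%N ->
  (\sum_(x < B) (x <= e)%N = e.+1)%N.
Proof.
elim: B => [//|B IH]; rewrite ltnS leq_eqVlt => /orP[/eqP <-|h].
  rewrite big_ord_recr /= leqnn addn1; congr _.+1.
  by rewrite -[RHS]sum_one; apply: eq_bigr => i _; rewrite ltnW.
by rewrite big_ord_recr /= IH // leqNgt h addn0.
Qed.

Lemma count_le B e : (e < B)%N ->
  \sum_(x : 'I_B) (((x <= e)%N)%:R : rat) = (e.+1)%:R.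
Proof. by move=> eB; rewrite -natr_sum count_le_nat. Qed.

Lemma step n' a : (0 < a)%N ->
  \sum_(p : {ffun 'I_n'.+1 * 'I_n'.+1 -> 'I_(ct_bound n'.+1 a 1)} | okF a p) (1 : rat)
  = \sum_(p' : {ffun 'I_n' * 'I_n' -> 'I_(ct_bound n' a 1)} | okF a p')
      \prod_(k : 'I_n') ((enat a p' k).+1)%:R.
Proof.
move=> a0.
rewrite (reindex_onto (fun q => build q.1 q.2) (fun p => (restr p, colp p))) /=; last first.
  move=> p okp; apply/ffunP => -[i j]; rewrite ffunE /=.
  case: (unliftP ord_max i) => [i'|] ->; last first.
    apply: val_inj => /=; have /andP[_ /forallP lz] := okp.
    have := lz ord_max => /forallP/(_ j)/implyP; rewrite /PofF /= -leqNgt -ltnS ltn_ord.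
    by move=> /(_ isT)/eqP.
  case: (unliftP ord_max j) => [j'|] ->; last by rewrite ffunE.
  rewrite ffunE /= inordK ?inord_val //.
  have := entry_bound (lift ord_max i') (lift ord_max j') a0 okp.
  rewrite /PofF lift_max => h; rewrite ltnS muln1; apply: leq_trans h _.
  have hi := ltn_ord i'.
  have : (2 ^ i'.+1 <= 2 ^ n')%N by rewrite leq_exp2l.
  rewrite expnS => h2; have h3 := leq_mul (leqnn (a + n')) h2.
  move: h3; set x := (2 ^ i')%N; set y := (2 ^ n')%N; nia.
rewrite (eq_bigl (fun q : {ffun 'I_n' * 'I_n' -> 'I_(ct_bound n' a 1)} * {ffun 'I_n' -> 'I_(ct_bound n'.+1 a 1)} => okF a q.1 && [forall k, (q.2 k <= enat a q.1 k)%N])); last first.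
  move=> [p' c] /=; rewrite okF_build //.
  have -> : restr (build p' c) = p'.
    apply/ffunP => -[i j]; rewrite ffunE /=.
    by have := build_ll p' c i j; rewrite /PofF => ->; rewrite inord_val.
  have -> : colp (build p' c) = c.
    apply/ffunP => k; rewrite ffunE; apply: val_inj.
    by have := build_lm p' c k; rewrite /PofF.
  by rewrite eqxx andbT.
rewrite -(pair_big_dep (fun p' => okF a p') (fun p' (c : {ffun 'I_n' -> 'I_(ct_bound n'.+1 a 1)}) => [forall k, (c k <= enat a p' k)%N]) (fun _ _ => (1:rat))) /=.
apply: eq_bigr => p' okp'.
rewrite big_mkcond /=.
transitivity (\sum_(c : {ffun 'I_n' -> 'I_(ct_bound n'.+1 a 1)})
   \prod_k (((c k <= enat a p' k)%N)%:R : rat)).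
  by apply: eq_bigr => c _; rewrite prod_bool; case: ifP.
rewrite -(bigA_distr_bigA (fun k (x : 'I_(ct_bound n'.+1 a 1)) => (((x <= enat a p' k)%N)%:R : rat))) /=.
apply: eq_bigr => k _; apply: count_le.
apply: leq_trans (Bmono n' a).
apply: (@leq_ltn_trans ((a + n') * 2 ^ n')); first exact: ev_bound.
by rewrite /ct_bound muln1.
Qed.

Lemma size_prod_le2 n (F : 'I_n -> {poly rat}) :
  (forall i, (size (F i) <= 2)%N) -> (size (\prod_i F i)%R <= n.+1)%N.
Proof.
elim: n F => [|n IH] F HF; first by rewrite big_ord0 size_poly1.
rewrite big_ord_recr /=; apply: leq_trans (size_polyMleq _ _) _.
have := IH (fun i => F (widen_ord (leqnSn n) i)) (fun i => HF _).
move=> /= h1; have h2 := HF ord_max.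
rewrite -subn1 leq_subLR add1n; apply: leq_trans (leq_add h1 h2) _; by rewrite addn2.
Qed.

Lemma size_psi m : (size (psi_coef 1 m) <= 2)%N.
Proof.
rewrite /psi_coef addrC mulrC size_MXaddC.
case: ifP => // _; rewrite ltnS; exact: size_polyC_leq1.
Qed.

Lemma psi_eval m : (psi_coef 1 m).[1] = (m.+1)%:R.
Proof.
rewrite /psi_coef hornerD hornerC hornerM hornerX hornerC mul1r.
rewrite /negbin_coef add1n subn1 binn big_ord_recr /= subnn muln0 addn0.
rewrite (eq_bigr (fun _ => 1%N)) => [|l _]; last first.
  by rewrite add1n subn1 binn /geom1_coef subn_gt0 ltn_ord.
by rewrite sum_one -natrD add1n.
Qed.

Theorem corollary5p9 (a n : nat) :
  (0 < a)%N -> (0 < n)%N ->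
  M n a 1 1 = \sum_(k < n.+1) Psi n.-1 k a 1 1.
Proof.
move=> a0; case: n => [//|n'] _ /=.
rewrite /M mElim //.
rewrite (eq_bigr (fun _ => 1)); last first.
  by move=> p _; apply: big1 => i _; rewrite /negbin_coef add1n subn1 binn.
rewrite step // /Psi.
set q := @iterCT _ n' a 1 _.
have Hq : q = \sum_(p' : {ffun 'I_n' * 'I_n' -> 'I_(ct_bound n' a 1)} | okF a p')
               \prod_i psi_coef 1 (enat a p' i) by rewrite /q mElim.
have Hs : (size q <= n'.+2)%N.
  rewrite Hq; apply: (big_ind (fun r : {poly rat} => (size r <= n'.+2)%N)).
  - by rewrite size_poly0.
  - move=> x y hx hy; apply: leq_trans (size_polyD _ _) _; by rewrite geq_max hx hy.
  - move=> p' _.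
    have h := @size_prod_le2 n' (fun i => psi_coef 1 (enat a p' i)) (fun i => size_psi _).
    exact: leq_trans h (leqnSn _).
transitivity q.[1]; last first.
  by rewrite (horner_coef_wide _ Hs); apply: eq_bigr => k _; rewrite expr1n mulr1.
rewrite Hq horner_sum; apply: eq_bigr => p' _.
by rewrite horner_prod; apply: eq_bigr => i _; rewrite psi_eval.
Qed.
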